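(* Let $n$ be a positive integer and $w_1\le\dots\le w_m$ a feasible partition of $n$ with partial sums $R_i=w_1+\dots+w_i$, $R_0=0$. Then for every $1\le i\le m$, $R_{i-1} \ge \frac{R_i-1}{3}$.
   Context: A weighing partition of a positive integer $n$ is a multiset of positive integers summing to $n$ such that every integer $\ell$ with $1\le\ell\le n$ is a sum $\sum_j u_jw_j$ with $u_j\in\{-1,0,1\}$. A feasible partition of $n$ is a weighing partition of $n$ whose number of parts $m$ is minimal among all weighing partitions of $n$, written $w_1\le\dots\le w_m$. *)

(* Defs.v *)
From mathcomp Require Import all_boot all_order all_algebra.
Set Implicit Arguments. Unset Strict Implicit. Unset Printing Implicit Defensive.
Import Order.TTheory GRing.Theory Num.Theory.

(* A multiset of positive integers is represented by a sequence of nats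
   (order irrelevant for the definitions below). *)

Definition signed_representable (w : seq nat) (l : nat) : Prop :=
  exists u : nat -> int,
    (forall j, (j < size w)%N -> u j \in [:: (-1)%R; 0%R; 1%R]) /\
    (\sum_(j < size w) u j * Posz (nth 0%N w j))%R = Posz l.

Definition weighing_partition (n : nat) (w : seq nat) : Prop :=
  all (fun x => 0 < x)%N w /\ sumn w = n /\
  (forall l, (1 <= l <= n)%N -> signed_representable w l).

Definition feasible_partition (n : nat) (w : seq nat) : Prop :=
  weighing_partition n w /\
  (forall v, weighing_partition n v -> (size w <= size v)%N).

Definition R (w : seq nat) (i : nat) : nat := sumn (take i w).

(* Main.v *)
Require Import Defs.
From mathcomp Require Import all_boot all_order all_algebra.
From mathcomp Require Import zify.
Import Order.TTheory GRing.Theory Num.Theory.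

Lemma sum_take (w : seq nat) (k : nat) :
  (\sum_(j < size w) (if (j < k)%N then nth 0%N w j else 0%N))%N = sumn (take k w).
Proof.
elim: w k => [|x w IH] k /=; first by rewrite big_ord0.
rewrite big_ord_recl /=.
case: k => [|k] /=.
  by rewrite big1.
by rewrite IH.
Qed.

Lemma sum_all (w : seq nat) :
  (\sum_(j < size w) nth 0%N w j)%N = sumn w.
Proof.
rewrite -(take_size w) -(sum_take w (size w)) take_size.
by apply: eq_bigr => j _; rewrite ltn_ord.
Qed.

Lemma PoszSum (I : finType) (F : I -> nat) :
  Posz (\sum_(j : I) F j)%N = (\sum_(j : I) Posz (F j))%R.
Proof. exact: (big_morph Posz PoszD (erefl _)). Qed.

Theorem mainTheorem7 (n : nat) (w : seq nat) :
  (0 < n)%N -> feasible_partition n w -> sorted leq w ->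
  forall i : nat, (1 <= i <= size w)%N ->
    (R w i <= 3 * R w i.-1 + 1)%N.
Proof.
move=> n0 [[wpos [sumw repw]] _] sw i /andP[i1 iw].
have ki : i = (i.-1).+1 by rewrite prednK.
set k := i.-1 in ki *.
have ks : (k < size w)%N by rewrite -ki.
have Ri : R w i = (R w k + nth 0%N w k)%N.
  by rewrite ki /R (take_nth 0%N ks) -cats1 sumn_cat /= addn0.
have Rn : (R w i <= n)%N.
  by rewrite -sumw -{2}(cat_take_drop i w) sumn_cat /R leq_addr.
rewrite Ri; rewrite leqNgt; apply/negP => big.
rewrite Ri in Rn.
set S := R w k in big Rn.
set l := (n - 2 * S - 1)%N.
have [u [Hu Hsum]] : signed_representable w l by apply: repw; rewrite /l; lia.
have Wsum : (\sum_(j < size w) Posz (nth 0%N w j))%R = Posz n.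
  by rewrite -PoszSum sum_all sumw.
have Ssum : (\sum_(j < size w) Posz (if (j < k)%N then nth 0%N w j else 0%N))%R = Posz S.
  by rewrite -PoszSum sum_take.
have Fle : forall j : 'I_(size w), (u j * Posz (nth 0%N w j) <= Posz (nth 0%N w j))%R.
  move=> j; have := Hu j (ltn_ord j).
  rewrite !inE => /orP[/eqP->|/orP[/eqP->|/eqP->]]; lia.
case: (boolP [exists j : 'I_(size w), (k <= j)%N && (u j != 1%R)]).
  move=> /existsP[j0 /andP[kj0 uj0]].
  have wmono : (nth 0%N w k <= nth 0%N w j0)%N.
    by apply: (sorted_leq_nth leq_trans leqnn) => //; rewrite inE.
  have F0 : (u j0 * Posz (nth 0%N w j0) <= 0)%R.
    have := Hu j0 (ltn_ord j0).
    rewrite !inE => /orP[/eqP E|/orP[/eqP E|/eqP E]]; rewrite E in uj0 *; try lia.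
  have : (\sum_(j < size w) u j * Posz (nth 0%N w j) <=
          \sum_(j < size w) Posz (nth 0%N w j) - Posz (nth 0%N w j0))%R.
    rewrite (bigD1 j0) //= [X in (_ <= X - _)%R](bigD1 j0) //=.
    have : (\sum_(j < size w | j != j0) u j * Posz (nth 0%N w j) <=
            \sum_(j < size w | j != j0) Posz (nth 0%N w j))%R.
      by apply: ler_sum => j _; apply: Fle.
    move=> H; rewrite [X in (_ <= X)%R]addrC addKr -[X in (_ <= X)%R]add0r; exact: lerD F0 H.
  rewrite Hsum Wsum; lia.
rewrite negb_exists => /forallP Hall.
have : (\sum_(j < size w) Posz (nth 0%N w j) -
        2 * \sum_(j < size w) Posz (if (j < k)%N then nth 0%N w j else 0%N) <=
        \sum_(j < size w) u j * Posz (nth 0%N w j))%R.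
  rewrite mulr_sumr -sumrB; apply: ler_sum => j _.
  have := Hall j; case: ltnP => jk /=.
    have := Hu j (ltn_ord j).
    rewrite !inE => /orP[/eqP->|/orP[/eqP->|/eqP->]]; lia.
  by move/negbNE/eqP => ->; lia.
rewrite Hsum Wsum Ssum; lia.
Qed.
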